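(* Let $h:(\mathbb{R}^n,0)\to(\mathbb{R}^n,0)$ be a bi-Lipschitz homeomorphism germ, let $A\subset\mathbb{R}^n$ be a set-germ at $0$ with $0\in\overline{A}$, and let $B\subset\mathbb{R}^n$ be a set-germ at $0$ with $0\in\overline{B}$. Assume that $A$ satisfies condition (SSP). Then $h(A)$ satisfies condition (SSP)-relative to $B$ if and only if $h(LD(A))$ satisfies condition (SSP)-relative to $B$.
   Context: For a set-germ $A\subset\mathbb{R}^n$ at $0$ with $0\in\overline A$, $D(A)=\{a\in S^{n-1}:\exists\, x_i\in A\setminus\{0\},\ x_i\to0,\ x_i/\|x_i\|\to a\}$ and $LD(A)=\{ta:a\in D(A),t\ge0\}$. For sequences, $\|u_m\|\ll\|v_m\|,\|w_m\|$ means $\|u_m\|/\|v_m\|\to0$ and $\|u_m\|/\|w_m\|\to0$. Given set-germs $A,B$ at $0$ with $0\in\overline A\cap\overline B$ and $D(A)\subseteq D(B)$, $A$ satisfies condition (SSP)-relative to $B$ if for every sequence $a_m\in B$ tending to $0$ with $\lim a_m/\|a_m\|\in D(A)$ there is a sequence $b_m\in A$ with $\|a_m-b_m\|\ll\|a_m\|,\|b_m\|$. Condition (SSP) (without reference) means (SSP)-relative to $\mathbb{R}^n$. A bi-Lipschitz homeomorphism germ is a homeomorphism germ $h$ with $h(0)=0$ and constants $0<K_1\le K_2$ with $K_1\|x-y\|\le\|h(x)-h(y)\|\le K_2\|x-y\|$ near $0$. *)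

(* Defs.v *)
From HB Require Import structures.
From mathcomp Require Import all_boot all_order all_algebra.
From mathcomp Require Import classical_sets reals.
Set Implicit Arguments. Unset Strict Implicit. Unset Printing Implicit Defensive.
Import Order.TTheory GRing.Theory Num.Theory.
Local Open Scope ring_scope.
Local Open Scope classical_set_scope.

Section Defs.
Variables (R : realType) (n : nat).
Local Notation vec := 'rV[R]_n.

Definition enorm (x : vec) : R := Num.sqrt (\sum_(i < n) x ord0 i ^+ 2).

Definition eball0 (r : R) : set vec := [set x | enorm x < r].

Definition seq_cvg (u : nat -> vec) (l : vec) : Prop :=
  forall e : R, 0 < e -> exists N : nat, forall m : nat, (N <= m)%N ->
    enorm (u m - l) < e.

Definition zero_in_closure (A : set vec) : Prop :=
  forall e : R, 0 < e -> exists x, A x /\ enorm x < e.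

Definition Dir (A : set vec) : set vec :=
  [set a | exists x : nat -> vec,
      (forall m, A (x m) /\ x m != 0) /\ seq_cvg x 0 /\
      seq_cvg (fun m => (enorm (x m))^-1 *: x m) a].

Definition LD (A : set vec) : set vec :=
  [set v | exists t : R, exists a : vec, 0 <= t /\ Dir A a /\ v = t *: a].

Definition negligible (u v : nat -> vec) : Prop :=
  forall e : R, 0 < e -> exists N : nat, forall m : nat, (N <= m)%N ->
    enorm (u m) <= e * enorm (v m).

(* condition (SSP)-relative to B (includes the standing requirement
   D(A) ⊆ D(B) under which the notion is defined) *)
Definition SSP_rel (A B : set vec) : Prop :=
  Dir A `<=` Dir B /\
  forall a : nat -> vec,
    (forall m, B (a m) /\ a m != 0) -> seq_cvg a 0 ->
    (exists d, Dir A d /\ seq_cvg (fun m => (enorm (a m))^-1 *: a m) d) ->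
    exists b : nat -> vec, (forall m, A (b m)) /\
      negligible (fun m => a m - b m) a /\
      negligible (fun m => a m - b m) b.

Definition SSP (A : set vec) : Prop := SSP_rel A setT.

(* h is a bi-Lipschitz homeomorphism germ (R^n,0) -> (R^n,0), realised on the
   ball of radius r: h(0)=0, bi-Lipschitz with constants 0<K1<=K2 on the ball,
   and the image of the ball contains a neighbourhood of 0. *)
Definition bilip_homeo_germ (h : vec -> vec) (r K1 K2 : R) : Prop :=
  h 0 = 0 /\ 0 < r /\ 0 < K1 /\ K1 <= K2 /\
  (forall x y, enorm x < r -> enorm y < r ->
     K1 * enorm (x - y) <= enorm (h x - h y) /\
     enorm (h x - h y) <= K2 * enorm (x - y)) /\
  (exists s : R, 0 < s /\ forall y, enorm y < s -> exists x, enorm x < r /\ h x = y).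

End Defs.

(* Main.v *)
Require Import Defs.
From HB Require Import structures.
From mathcomp Require Import all_boot all_order all_algebra.
From mathcomp Require Import classical_sets reals.
From mathcomp Require Import boolp topology normedtype sequences.
From mathcomp Require Import ring lra.
Import Order.TTheory GRing.Theory Num.Theory.
Import numFieldNormedType.Exports.
Local Open Scope ring_scope.
Local Open Scope classical_set_scope.

Section Norm.
Context {R : realType} {n : nat}.
Local Notation vec := 'rV[R]_n.
Implicit Types x y : vec.

Definition sq x : R := \sum_(i < n) x ord0 i ^+ 2.

Lemma sq_ge0 x : 0 <= sq x.
Proof. by apply: sumr_ge0 => i _; exact: sqr_ge0. Qed.

Lemma enorm_ge0 x : 0 <= enorm x.
Proof. exact: sqrtr_ge0. Qed.

Lemma enorm_sq x : enorm x ^+ 2 = sq x.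
Proof. by rewrite sqr_sqrtr // sq_ge0. Qed.

Lemma enorm_eq0 x : enorm x = 0 -> x = 0.
Proof.
move=> /eqP; rewrite sqrtr_eq0 => H.
have H0 : sq x = 0 by apply/eqP; rewrite eq_le H sq_ge0.
apply/rowP => i; rewrite mxE.
have := @psumr_eq0P _ _ xpredT (fun i => x ord0 i ^+ 2) (fun i _ => sqr_ge0 _) H0 i isT.
by move/eqP; rewrite sqrf_eq0 => /eqP.
Qed.

Lemma enorm0 : enorm (0 : vec) = 0.
Proof. by rewrite /enorm big1 ?sqrtr0 // => i _; rewrite mxE expr0n. Qed.

Lemma enorm_gt0 x : x != 0 -> 0 < enorm x.
Proof.
move=> Hx; rewrite lt_def enorm_ge0 andbT; apply/eqP => /enorm_eq0 H.
by rewrite H eqxx in Hx.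
Qed.

Lemma enormZ (c : R) x : enorm (c *: x) = `|c| * enorm x.
Proof.
rewrite /enorm -sqrtr_sqr -sqrtrM ?sqr_ge0 //; congr Num.sqrt.
by rewrite mulr_sumr; apply: eq_bigr => i _; rewrite mxE exprMn.
Qed.

Lemma enormN x : enorm (- x) = enorm x.
Proof. by rewrite -scaleN1r enormZ normrN normr1 mul1r. Qed.

Lemma enorm_coord x i : `|x ord0 i| <= enorm x.
Proof.
rewrite -sqrtr_sqr ler_sqrt ?sq_ge0 // /sq (bigD1 i) //= lerDl.
by apply: sumr_ge0 => j _; exact: sqr_ge0.
Qed.

Lemma CS x y : (\sum_(i < n) x ord0 i * y ord0 i) ^+ 2 <= sq x * sq y.
Proof.
set s := \sum_(i < n) _.
have key t : 0 <= sq x + 2 * t * s + t ^+ 2 * sq y.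
  have -> : sq x + 2 * t * s + t ^+ 2 * sq y =
     \sum_(i < n) (x ord0 i + t * y ord0 i) ^+ 2.
    rewrite /sq /s mulr_sumr mulr_sumr -!big_split /=.
    by apply: eq_bigr => i _; ring.
  by apply: sumr_ge0 => i _; exact: sqr_ge0.
have [y0|ypos] := eqVneq (sq y) 0.
  have : y = 0 by apply: enorm_eq0; rewrite /enorm -/(sq y) y0 sqrtr0.
  move=> yz; rewrite /s big1 ?expr0n ?mulr_ge0 ?sq_ge0 // => i _.
  by rewrite yz mxE mulr0.
have yp : 0 < sq y by rewrite lt_def ypos sq_ge0.
have := key (- s / sq y).
have -> : sq x + 2 * (- s / sq y) * s + (- s / sq y) ^+ 2 * sq y = sq x - s ^+ 2 / sq y.
  by field; rewrite ypos.
rewrite subr_ge0 ler_pdivrMr //.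
Qed.

Lemma sqD x y : sq (x + y) = sq x + 2 * (\sum_(i < n) x ord0 i * y ord0 i) + sq y.
Proof.
rewrite /sq mulr_sumr -!big_split /=; apply: eq_bigr => i _; rewrite !mxE; ring.
Qed.

Lemma dot_le x y : \sum_(i < n) x ord0 i * y ord0 i <= enorm x * enorm y.
Proof.
apply: (le_trans (ler_norm _)).
rewrite -sqrtr_sqr /enorm -sqrtrM ?sq_ge0 // ler_sqrt ?mulr_ge0 ?sq_ge0 //.
exact: CS.
Qed.

Lemma enormD x y : enorm (x + y) <= enorm x + enorm y.
Proof.
have h0 : 0 <= enorm x + enorm y by rewrite addr_ge0 ?enorm_ge0.
rewrite -(ger0_norm h0) -sqrtr_sqr [enorm (x + y)]/enorm -/(sq (x + y)) ler_sqrt ?sqr_ge0 //.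
rewrite sqD sqrrD !enorm_sq lerD2r lerD2l.
have := dot_le x y; lra.
Qed.

Lemma enormB x y : enorm (x - y) = enorm (y - x).
Proof. by rewrite -enormN opprB. Qed.

Lemma enorm_triB x y : enorm x - enorm y <= enorm (x - y).
Proof.
rewrite lerBlDr; apply: le_trans (enormD _ _); by rewrite subrK.
Qed.

Lemma enorm_sum_le x : enorm x <= \sum_(i < n) `|x ord0 i|.
Proof.
have h0 : 0 <= \sum_(i < n) `|x ord0 i| by apply: sumr_ge0.
rewrite -(ger0_norm h0) -sqrtr_sqr /enorm ler_sqrt ?sqr_ge0 //.
rewrite expr2 mulr_suml; apply: ler_sum => i _.
rewrite mulr_sumr (bigD1 i) //= -normrM -expr2 ger0_norm ?sqr_ge0 // lerDl.
by apply: sumr_ge0 => j _; rewrite mulr_ge0.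
Qed.

End Norm.

Definition ev (P : nat -> Prop) := exists N, forall m, (N <= m)%N -> P m.

Lemma evI {P Q : nat -> Prop} : ev P -> ev Q -> ev (fun m => P m /\ Q m).
Proof.
move=> [N1 H1] [N2 H2]; exists (maxn N1 N2) => m Hm; split.
  by apply: H1; apply: leq_trans Hm; exact: leq_maxl.
by apply: H2; apply: leq_trans Hm; exact: leq_maxr.
Qed.

Lemma evW {P Q : nat -> Prop} : ev P -> (forall m, P m -> Q m) -> ev Q.
Proof. by move=> [N HN] H; exists N => m /HN /H. Qed.

Lemma ev_ge N : ev (fun m => (N <= m)%N).
Proof. by exists N. Qed.

Lemma ev_sub {P : nat -> Prop} {f : nat -> nat} : (forall m, (m <= f m)%N) ->
  ev P -> ev (fun m => P (f m)).
Proof.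
move=> Hf [N HN]; exists N => m Hm; apply: HN; exact: leq_trans Hm (Hf m).
Qed.


Lemma incr_ge (f : nat -> nat) : increasing_seq f -> forall m, (m <= f m)%N.
Proof.
move/increasing_seqP => H; elim=> [|m IH] //.
have := H m; rewrite ltEnat /= => Hm; exact: leq_ltn_trans IH Hm.
Qed.

Lemma BW1 (R : realType) (u : nat -> R) (M : R) : (forall m, `|u m| <= M) ->
  exists f : nat -> nat, (forall m, (m <= f m)%N) /\
  exists l, forall e, 0 < e -> ev (fun m => `|u (f m) - l| < e).
Proof.
move=> HM.
have bnd : bounded_fun u.
  exists M; split; first exact: num_real.
  by move=> x Mx y _ /=; rewrite (le_trans (HM y)) // ltW.
have [f finc /cvg_ex [l Hl]] := bolzano_weierstrass bnd.
exists f; split; first exact: incr_ge.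
exists l => e e0; move/cvgrPdist_lt : Hl => /(_ e e0) [N _ HN].
by exists N => m Hm; rewrite distrC; exact: HN.
Qed.

Lemma BWv (R : realType) (n : nat) (u : nat -> 'rV[R]_n) (M : R) :
  (forall m, enorm (u m) <= M) ->
  exists f : nat -> nat, (forall m, (m <= f m)%N) /\ exists l, seq_cvg (u \o f) l.
Proof.
move=> HM.
have step : forall k, (k <= n)%N -> exists f : nat -> nat, (forall m, (m <= f m)%N) /\
   forall i : 'I_n, (i < k)%N -> exists li : R,
     forall e, 0 < e -> ev (fun m => `|u (f m) ord0 i - li| < e).
  elim=> [|k IH] Hk.
    by exists id; split => // i.
  have [f [Hf Hc]] := IH (ltnW Hk).
  pose i0 := Ordinal Hk.
  have [g [Hg [l Hl]]] := @BW1 R (fun m => u (f m) ord0 i0) M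
     (fun m => le_trans (enorm_coord _ _) (HM (f m))).
  exists (f \o g); split.
    by move=> m /=; apply: leq_trans (Hg m) (Hf (g m)).
  move=> i; rewrite ltnS leq_eqVlt => /orP [/eqP ik|ik].
    have -> : i = i0 by apply: val_inj.
    by exists l.
  have [li Hli] := Hc i ik; exists li => e e0.
  by have := ev_sub Hg (Hli e e0).
have [f [Hf Hc]] := step n (leqnn n).
have /choice [L HL] : forall i : 'I_n, exists li : R,
     forall e, 0 < e -> ev (fun m => `|u (f m) ord0 i - li| < e).
  by move=> i; exact: Hc i (ltn_ord i).
exists f; split => //; exists (\row_i L i) => e e0.
have e'0 : 0 < e / n.+1%:R by rewrite divr_gt0 // ltr0n.
have /choice [N HN] : forall i : 'I_n, exists N, forall m, (N <= m)%N ->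
   `|u (f m) ord0 i - L i| < e / n.+1%:R.
  by move=> i; exact: HL i _ e'0.
exists (\max_i N i) => m Hm.
apply: le_lt_trans (enorm_sum_le _) _.
apply: (@le_lt_trans _ _ (\sum_(i < n) e / n.+1%:R)).
  apply: ler_sum => i _; rewrite !mxE; apply: ltW; apply: HN.
  exact: leq_trans (leq_bigmax i) Hm.
rewrite sumr_const card_ord -[_ *+ n]mulr_natr -mulrA gtr_pMr // mulrC.
by rewrite ltr_pdivrMr ?ltr0n // mul1r ltr_nat.
Qed.

Section Util.
Context {R : realType} {n : nat}.
Local Notation vec := 'rV[R]_n.
Implicit Types x y : vec.

Lemma ev_inv {e : R} : 0 < e -> ev (fun k => k.+1%:R^-1 < e).
Proof.
move=> e0; pose J := Num.Def.archi_bound (e^-1).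
have HJ : e^-1 < J%:R by apply: archi_boundP; rewrite invr_ge0 ltW.
exists J => k Hk; rewrite -(invrK e) ltf_pV2 ?posrE ?ltr0n ?invr_gt0 //.
apply: lt_le_trans HJ _; rewrite ler_nat; exact: leq_trans Hk (leqnSn k).
Qed.


Lemma tri3 x y z : enorm (x - z) <= enorm (x - y) + enorm (y - z).
Proof. by have := enormD (x - y) (y - z); rewrite addrA subrK. Qed.

Lemma norm_le x y : enorm y <= enorm x + enorm (x - y).
Proof. by have := enormD x (y - x); rewrite addrC subrK enormB. Qed.

Lemma norm_ge x y : enorm x <= enorm y + enorm (x - y).
Proof. by have := enormD y (x - y); rewrite addrC subrK. Qed.

Lemma dir_norm x : enorm ((enorm x)^-1 *: x) <= 1.
Proof.
rewrite enormZ ger0_norm ?invr_ge0 ?enorm_ge0 //.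
have [->|xn0] := eqVneq x 0; first by rewrite enorm0 mulr0.
by rewrite mulVf // gt_eqF // enorm_gt0.
Qed.

Lemma dir_unit x : x != 0 -> enorm ((enorm x)^-1 *: x) = 1.
Proof.
move=> xn0; rewrite enormZ ger0_norm ?invr_ge0 ?enorm_ge0 //.
by rewrite mulVf // gt_eqF // enorm_gt0.
Qed.

Lemma dir_close x y : x != 0 -> y != 0 ->
  enorm ((enorm x)^-1 *: x - (enorm y)^-1 *: y) * enorm y <= 2 * enorm (x - y).
Proof.
move=> xn0 yn0.
have hx := enorm_gt0 _ xn0; have hy := enorm_gt0 _ yn0.
rewrite mulrC -{1}(ger0_norm (enorm_ge0 y)) -enormZ scalerBr !scalerA mulfV ?gt_eqF // scale1r.
have -> : enorm y * (enorm x)^-1 *: x - y =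
          (x - y) + ((enorm y - enorm x) / enorm x) *: x.
  rewrite mulrBl mulfV ?gt_eqF // scalerBl scale1r.
  by rewrite addrCA addrAC subrr add0r.
apply: le_trans (enormD _ _) _.
rewrite enormZ normrM [`|(enorm x)^-1|]ger0_norm ?invr_ge0 ?enorm_ge0 // -mulrA mulVf ?gt_eqF // mulr1.
have : `|enorm y - enorm x| <= enorm (x - y).
  rewrite ler_norml; apply/andP; split.
    by rewrite lerBrDl; have := norm_ge x y; lra.
  by have := norm_le x y; lra.
lra.
Qed.

Lemma abs_small (c : R) : (forall e, 0 < e -> `|c| < e) -> c = 0.
Proof.
move=> H; apply/eqP; apply: contraT => cn0.
by have := H `|c|; rewrite normr_gt0 cn0 ltxx => /(_ isT).
Qed.

Lemma not_ev {P : nat -> Prop} : ~ ev P -> forall N, exists m, (N <= m)%N /\ ~ P m.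
Proof.
move=> H N; apply: contrapT => H2; apply: H; exists N => m Hm.
apply: contrapT => Pm; apply: H2; by exists m.
Qed.

Lemma cvg_sub {u : nat -> vec} {l} {g : nat -> nat} : (forall k, (k <= g k)%N) ->
  seq_cvg u l -> seq_cvg (u \o g) l.
Proof. by move=> Hg H e e0; exact: ev_sub Hg (H e e0). Qed.

Lemma BWinf (u : nat -> vec) (P : nat -> Prop) (M : R) :
  (forall m, enorm (u m) <= M) -> (forall N, exists m, (N <= m)%N /\ P m) ->
  exists g : nat -> nat, (forall k, (k <= g k)%N) /\ (forall k, P (g k)) /\
    exists l, seq_cvg (u \o g) l.
Proof.
move=> HM /choice [F HF].
have [f [Hf [l Hl]]] := @BWv R n (u \o F) M (fun m => HM (F m)).
exists (F \o f); split; first by move=> k; apply: leq_trans (Hf k) (HF _).1.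
by split; [move=> k; exact: (HF _).2 | exists l].
Qed.

End Util.

Section Main.
Context {R : realType} {n : nat}.
Local Notation vec := 'rV[R]_n.
Implicit Types x y : vec.

Lemma enorm_lip x y : `|enorm x - enorm y| <= enorm (x - y).
Proof.
rewrite ler_norml; apply/andP; split.
  by have := norm_le x y; lra.
by have := norm_ge x y; lra.
Qed.

Lemma Dir_unit {A : set vec} {a} : Dir A a -> enorm a = 1.
Proof.
move=> [x [Hx [H0 Hd]]]; apply/eqP; rewrite -subr_eq0; apply/eqP.
apply: abs_small => e e0; have [N HN] := Hd e e0.
have := HN N (leqnn N); have := dir_unit _ (Hx N).2.
have := enorm_lip ((enorm (x N))^-1 *: x N) a.
rewrite enormB => H1 H2 H3.
rewrite distrC -H2; exact: le_lt_trans H1 H3.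
Qed.

Lemma cvgP (u : nat -> vec) l :
  (forall e, 0 < e -> ev (fun m => enorm (u m - l) < e)) -> seq_cvg u l.
Proof. by []. Qed.

Lemma Dir_closed {A : set vec} {a : nat -> vec} {l} :
  (forall k, Dir A (a k)) -> seq_cvg a l -> Dir A l.
Proof.
move=> Ha Hl.
have /choice [z Hz] : forall k, exists z, (A z /\ z != 0) /\
    enorm z < k.+1%:R^-1 /\ enorm ((enorm z)^-1 *: z - a k) < k.+1%:R^-1.
  move=> k; have [x [Hx [H0 Hd]]] := Ha k.
  have kp : 0 < k.+1%:R^-1 :> R by rewrite invr_gt0 ltr0n.
  have [N HN] := evI (H0 _ kp) (Hd _ kp).
  exists (x N); split; first exact: Hx.
  by have := HN N (leqnn N); rewrite subr0.
exists z; split; first by move=> k; exact: (Hz k).1.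
split.
  apply: cvgP => e e0; apply: (@evW _ _ (ev_inv e0)) => k Hk; rewrite subr0.
  exact: lt_trans (Hz k).2.1 Hk.
apply: cvgP => e e0; have e2 : 0 < e / 2 by rewrite divr_gt0.
apply: (@evW _ _ (evI (ev_inv e2) (Hl _ e2))) => k [H1 H2].
apply: le_lt_trans (tri3 _ (a k) _) _.
have H3 := (Hz k).2.2; rewrite (splitr e); apply: ltrD => //; exact: lt_trans H3 H1.
Qed.

Definition Approx (S T : set vec) := forall y : nat -> vec,
  ev (fun m => T (y m) /\ y m != 0) -> seq_cvg y 0 ->
  forall e, 0 < e -> ev (fun m => exists z, S z /\ enorm (y m - z) <= e * enorm (y m)).

Fixpoint dchoose (P : nat -> R -> vec -> Prop) (m j : nat) : vec :=
  match j with
  | 0 => 0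
  | j'.+1 => match pselect (exists z, P m (j'.+1%:R^-1) z) with
             | left H => proj1_sig (cid H)
             | right _ => dchoose P m j'
             end
  end.

Lemma dchooseP (P : nat -> R -> vec -> Prop) :
  (forall m e e' z, P m e z -> e <= e' -> P m e' z) ->
  forall m j J, (J < j)%N -> (exists z, P m (J.+1%:R^-1) z) ->
    P m (J.+1%:R^-1) (dchoose P m j).
Proof.
move=> Hmono m; elim=> [|j IH] J // HJ HE /=.
case: pselect => [H|H].
  apply: Hmono (proj2_sig (cid H)) _.
  by rewrite lef_pV2 ?posrE ?ltr0n // ler_nat.
move: HJ; rewrite ltnS leq_eqVlt => /orP [/eqP JE|JL].
  by exfalso; apply: H; rewrite -JE.
exact: IH.
Qed.

Lemma diag (P : nat -> R -> vec -> Prop) :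
  (forall m e e' z, P m e z -> e <= e' -> P m e' z) ->
  (forall e, 0 < e -> ev (fun m => exists z, P m e z)) ->
  exists x : nat -> vec, forall e, 0 < e -> ev (fun m => P m e (x m)).
Proof.
move=> Hmono H; exists (fun m => dchoose P m m) => e e0.
have [J HJ] := ev_inv e0.
have HJJ := HJ J (leqnn J).
have Jp : 0 < J.+1%:R^-1 :> R by rewrite invr_gt0 ltr0n.
have [N HN] := H _ Jp.
exists (maxn N J.+1) => m Hm.
apply: (Hmono) (ltW HJJ).
apply: dchooseP; first exact: Hmono.
  exact: leq_trans (leq_maxr _ _) Hm.
by apply: HN; exact: leq_trans (leq_maxl _ _) Hm.
Qed.

Lemma approx_seq (S T : set vec) (y : nat -> vec) : Approx S T ->
  ev (fun m => T (y m) /\ y m != 0) -> seq_cvg y 0 ->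
  exists x : nat -> vec, forall e, 0 < e ->
    ev (fun m => S (x m) /\ enorm (y m - x m) <= e * enorm (y m)).
Proof.
move=> HA HT Hy.
apply: (@diag (fun m e z => S z /\ enorm (y m - z) <= e * enorm (y m))).
  move=> m e e' z [Sz Hz] ee'; split => //; apply: le_trans Hz _.
  by apply: ler_wpM2r => //; exact: enorm_ge0.
exact: HA.
Qed.

Lemma ev_shift {P : nat -> Prop} N : ev P -> ev (fun k => P (k + N)%N).
Proof. by apply: ev_sub => k; exact: leq_addr. Qed.

Lemma dir_approx {S T : set vec} : Approx S T -> Dir T `<=` Dir S.
Proof.
move=> HA d [y [Hy [Hy0 Hd]]].
have [x Hx] := @approx_seq _ _ y HA (ex_intro _ 0%N (fun m _ => Hy m)) Hy0.
have half : 0 < 2^-1 :> R by rewrite invr_gt0.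
have [N HN] := Hx _ half.
have xn0 : forall m, (N <= m)%N -> x m != 0.
  move=> m /HN [_ H]; apply/eqP => x0; move: H; rewrite x0 subr0.
  have := enorm_gt0 _ (Hy m).2; lra.
exists (fun k => x (k + N)%N); split.
  by move=> k; split; [exact: (HN _ (leq_addl _ _)).1 | exact: xn0 _ (leq_addl _ _)].
split.
  apply: cvgP => e e0.
  have e2 : 0 < e / 2%:R by rewrite divr_gt0.
  have H0 := ev_shift N (evI (Hy0 _ e2) (Hx _ half)).
  apply: (evW H0).
  move=> k [H1 [_ H2]]; rewrite subr0 in H1 *.
  have := norm_le (y (k + N)%N) (x (k + N)%N).
  have := enorm_ge0 (y (k + N)%N).
  move: H1 H2; set a := enorm (y _); set b := enorm (x _); set c := enorm (_ - _).
  move=> H1 H2 H3 H4; rewrite subr0 -/b.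
  lra.
apply: cvgP => e e0.
have e4 : 0 < e / 4%:R by rewrite divr_gt0.
have e2 : 0 < e / 2%:R by rewrite divr_gt0.
apply: (@evW _ _ (ev_shift N (evI (evI (Hd _ e2) (Hx _ e4)) (ev_ge N)))).
move=> k [[H1 [_ H2]] Hk].
apply: le_lt_trans (tri3 _ ((enorm (y (k + N)%N))^-1 *: y (k + N)%N) _) _.
have yp := enorm_gt0 _ (Hy (k + N)%N).2.
have Hc := dir_close _ _ (xn0 _ Hk) (Hy (k + N)%N).2.
rewrite enormB in H2.
have Hc2 : enorm ((enorm (x (k + N)%N))^-1 *: x (k + N)%N -
    (enorm (y (k + N)%N))^-1 *: y (k + N)%N) <= e / 2%:R.
  rewrite -(ler_pM2r yp); apply: le_trans Hc _.
  have : e / 2%:R = 2 * (e / 4%:R) by field.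
  move=> ->; rewrite -mulrA; apply: ler_wpM2l => //.
move: Hc2 H1; set p := enorm (_ - _); set q := enorm (_ - _).
move=> Hc2 H1; have : e / 2%:R + e / 2%:R = e by field.
lra.
Qed.

Lemma negP' (u v : nat -> vec) :
  (forall e, 0 < e -> ev (fun m => enorm (u m) <= e * enorm (v m))) -> negligible u v.
Proof. by []. Qed.

Lemma ssp_transfer {X Y B : set vec} :
  Approx X Y -> Approx Y X -> SSP_rel X B -> SSP_rel Y B.
Proof.
move=> HXY HYX [HD HS]; split.
  by move=> d /(dir_approx HXY) /HD.
move=> a Ha Ha0 [d [Hd Had]].
have [b [Hb [N1 N2]]] := HS a Ha Ha0 (ex_intro _ d (conj (dir_approx HXY d Hd) Had)).
have half : 0 < 2^-1 :> R by rewrite invr_gt0.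
have hb : ev (fun m => X (b m) /\ b m != 0).
  have [N HN] := N2 _ half; exists N => m Hm; split => //.
  apply/eqP => b0; have := HN m Hm; rewrite b0 subr0 enorm0 mulr0.
  have := enorm_gt0 _ (Ha m).2; lra.
have hab : ev (fun m => enorm (b m) <= 2 * enorm (a m)).
  apply: (evW (N1 _ ltr01)) => m H.
  have := norm_le (a m) (b m); lra.
have hb0 : seq_cvg b 0.
  apply: cvgP => e e0; have e2 : 0 < e / 2%:R by rewrite divr_gt0.
  apply: (evW (evI (Ha0 _ e2) hab)) => m [H1 H2]; rewrite subr0 in H1 *.
  by rewrite subr0; lra.
have [c Hc] := @approx_seq _ _ b HYX hb hb0.
have [p Yp] : exists p, Y p by case: Hd => ys [Hys _]; exists (ys 0%N); exact: (Hys 0%N).1.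
pose c' m := match pselect (Y (c m)) with left _ => c m | right _ => p end.
have key : forall e, 0 < e -> ev (fun m => enorm (a m - c' m) <= e * enorm (a m)).
  move=> e e0; have e4 : 0 < e / 4%:R by rewrite divr_gt0.
  apply: (evW (evI (evI (N1 _ e4) (Hc _ e4)) hab)) => m [[H1 [Yc H2]] H3].
  have -> : c' m = c m by rewrite /c'; case: pselect.
  have := tri3 (a m) (b m) (c m).
  have : e / 4%:R * enorm (b m) <= e / 4%:R * (2 * enorm (a m)).
    by apply: ler_wpM2l => //; exact: ltW.
  have := enorm_ge0 (a m).
  nra.
exists c'; split; first by move=> m; rewrite /c'; case: pselect.
split; first exact: negP'.
apply: negP' => e e0; have e2 : 0 < e / 2%:R by rewrite divr_gt0.
apply: (evW (evI (key _ e2) (key _ half))) => m [H1 H2].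
have H3 := norm_ge (a m) (c' m).
have : e * (2^-1 * enorm (a m)) <= e * enorm (c' m).
  apply: ler_wpM2l; first exact: ltW.
  have := enorm_ge0 (a m); lra.
nra.
Qed.

Lemma dirK {x} : x != 0 -> enorm x *: ((enorm x)^-1 *: x) = x.
Proof. by move=> xn0; rewrite scalerA mulfV ?scale1r // gt_eqF // enorm_gt0. Qed.

Lemma approx_LD (A : set vec) : Approx (LD A) A.
Proof.
move=> y [N0 HN0] Hy0 e e0.
apply: contrapT => Hn; have Hinf := not_ev Hn.
have Hinf' : forall N, exists m, (N <= m)%N /\
    ((A (y m) /\ y m != 0) /\
     ~ (exists z, LD A z /\ enorm (y m - z) <= e * enorm (y m))).
  move=> N; have [m [Hm Hq]] := Hinf (maxn N N0); exists m; split.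
    exact: leq_trans (leq_maxl _ _) Hm.
  by split => //; apply: HN0; exact: leq_trans (leq_maxr _ _) Hm.
have [g [Hg [HP [l Hl]]]] := @BWinf R n (fun m => (enorm (y m))^-1 *: y m) _ 1
   (fun m => dir_norm _) Hinf'.
have Dl : Dir A l.
  exists (y \o g); split; first by move=> k; exact: (HP k).1.
  by split; [exact: cvg_sub Hg Hy0 | exact: Hl].
have [N HN] := Hl e e0.
apply: (HP N).2; exists (enorm (y (g N)) *: l); split.
  by exists (enorm (y (g N))), l; split; [exact: enorm_ge0 | split].
have yn0 := (HP N).1.2.
rewrite -{1}(dirK yn0) -scalerBr enormZ ger0_norm ?enorm_ge0 // mulrC.
apply: ler_wpM2r; first exact: enorm_ge0.
exact: ltW (HN N (leqnn N)).
Qed.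

Lemma approx_SSP {A : set vec} : SSP A -> Approx A (LD A).
Proof.
move=> [_ HS] y [N0 HN0] Hy0 e e0.
apply: contrapT => Hn; have Hinf := not_ev Hn.
have Hinf' : forall N, exists m, (N <= m)%N /\
    ((LD A (y m) /\ y m != 0) /\
     ~ (exists z, A z /\ enorm (y m - z) <= e * enorm (y m))).
  move=> N; have [m [Hm Hq]] := Hinf (maxn N N0); exists m; split.
    exact: leq_trans (leq_maxl _ _) Hm.
  by split => //; apply: HN0; exact: leq_trans (leq_maxr _ _) Hm.
have [g [Hg [HP [l Hl]]]] := @BWinf R n (fun m => (enorm (y m))^-1 *: y m) _ 1
   (fun m => dir_norm _) Hinf'.
have Hdir : forall k, Dir A ((enorm (y (g k)))^-1 *: y (g k)).
  move=> k; have [[[t [a [t0 [Da ya]]]] yn0] _] := HP k.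
  have a1 := Dir_unit Da.
  have tn0 : t != 0 by apply: contraNneq yn0 => t0'; rewrite ya t0' scale0r.
  rewrite ya enormZ a1 mulr1 ger0_norm // scalerA mulVf // scale1r.
  exact: Da.
have Dl : Dir A l := Dir_closed Hdir Hl.
have [b [Hb [Nb _]]] := HS (y \o g) (fun k => conj I (HP k).1.2) (cvg_sub Hg Hy0)
   (ex_intro _ l (conj Dl Hl)).
have [N HN] := Nb e e0.
apply: (HP N).2; exists (b N); split; first exact: Hb.
exact: HN N (leqnn N).
Qed.

Lemma approx_ball {S T : set vec} {r : R} : 0 < r -> Approx S T ->
  Approx (S `&` eball0 r) (T `&` eball0 r).
Proof.
move=> r0 HA y Hy Hy0 e e0.
have Hy' : ev (fun m => T (y m) /\ y m != 0).
  by apply: (evW Hy) => m [[Ty _] yn0].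
have e' : 0 < Num.min e 1 by rewrite lt_min e0 ltr01.
have me : Num.min e 1 <= e by rewrite ge_min lexx.
have m1 : Num.min e 1 <= 1 by rewrite ge_min lexx orbT.
have r2 : 0 < r / 2%:R by rewrite divr_gt0.
apply: (evW (evI (HA y Hy' Hy0 _ e') (Hy0 _ r2))) => m [[z [Sz Hz]] Hr].
rewrite subr0 in Hr.
have ya := enorm_ge0 (y m).
have H1 : Num.min e 1 * enorm (y m) <= enorm (y m).
  by rewrite -[leRHS]mul1r; apply: ler_wpM2r.
have H2 : Num.min e 1 * enorm (y m) <= e * enorm (y m) by apply: ler_wpM2r.
exists z; split; last exact: le_trans Hz H2.
split => //; rewrite /eball0 /=.
have := norm_le (y m) z; lra.
Qed.

Lemma approx_h {h : vec -> vec} {r K1 K2 : R} {S T : set vec} :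
  bilip_homeo_germ h r K1 K2 -> S `<=` eball0 r -> T `<=` eball0 r ->
  Approx S T -> Approx (h @` S) (h @` T).
Proof.
move=> [h0 [r0 [K10 [K12 [Hlip _]]]]] HS HT HA y Hy Hy0 e e0.
have K20 : 0 < K2 by apply: lt_le_trans K12.
have /choice [w Hw] : forall m, exists w, (h @` T) (y m) -> T w /\ h w = y m.
  move=> m; case: (pselect ((h @` T) (y m))) => [[w Tw hw]|nH].
    by exists w.
  by exists 0 => H; exfalso; exact: nH H.
have z0 : eball0 r (0 : vec) by rewrite /eball0 /= enorm0.
have Kw : forall m, (h @` T) (y m) -> K1 * enorm (w m) <= enorm (y m).
  move=> m img; have [Tw hw] := Hw m img.
  have := (Hlip (w m) 0 (HT _ Tw) z0).1.
  by rewrite h0 !subr0 hw.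
have Hw' : ev (fun m => T (w m) /\ w m != 0).
  apply: (evW Hy) => m [img yn0]; have [Tw hw] := Hw m img; split => //.
  by apply: contraNneq yn0 => w0; rewrite -hw w0 h0.
have Hw0 : seq_cvg w 0.
  apply: cvgP => e1 e10; have e1K : 0 < K1 * e1 by rewrite mulr_gt0.
  apply: (evW (evI (Hy0 _ e1K) Hy)) => m [H1 [img _]].
  rewrite subr0 in H1 *; have := Kw m img.
  move=> H2; have H3 : K1 * enorm (w m) < K1 * e1 by apply: le_lt_trans H2 H1.
  by move: H3; rewrite subr0 ltr_pM2l.
have e' : 0 < e * K1 / K2 by rewrite divr_gt0 ?mulr_gt0.
apply: (evW (evI (HA w Hw' Hw0 _ e') Hy)) => m [[z [Sz Hz]] [img yn0]].
have [Tw hw] := Hw m img.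
exists (h z); split; first by exists z.
rewrite -{1}hw.
have L := (Hlip (w m) z (HT _ Tw) (HS _ Sz)).2.
apply: le_trans L _.
apply: (@le_trans _ _ (K2 * (e * K1 / K2 * enorm (w m)))).
  by apply: ler_wpM2l => //; exact: ltW.
have -> : K2 * (e * K1 / K2 * enorm (w m)) = e * (K1 * enorm (w m)).
  by field; rewrite gt_eqF.
apply: ler_wpM2l; first exact: ltW.
exact: Kw.
Qed.

End Main.

Theorem theorem2p13 (R : realType) (n : nat) (h : 'rV[R]_n -> 'rV[R]_n)
  (r K1 K2 : R) (A B : set 'rV[R]_n) :
  bilip_homeo_germ h r K1 K2 ->
  zero_in_closure A -> zero_in_closure B ->
  SSP A ->
  (SSP_rel (h @` (A `&` eball0 r)) B <-> SSP_rel (h @` (LD A `&` eball0 r)) B).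
Proof.
move=> Hh _ _ HA.
have r0 : 0 < r by case: Hh => _ [].
have sub1 : forall C : set 'rV[R]_n, C `&` eball0 r `<=` eball0 r by move=> C x [].
have HXY := approx_h Hh (sub1 A) (sub1 (LD A)) (approx_ball r0 (approx_SSP HA)).
have HYX := approx_h Hh (sub1 (LD A)) (sub1 A) (approx_ball r0 (approx_LD A)).
by split; [exact: ssp_transfer HXY HYX | exact: ssp_transfer HYX HXY].
Qed.
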